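(* In the hexagonal three-direction setting with the random model described in the context, let $k\ge0$, let $R_b=\{r\in R: X_r=0\}$ be the set of rays with nonzero measurement, and let $C_b=\mathcal N(R_b)\setminus\mathcal N(R\setminus R_b)$ (equivalently, the set of cells none of whose three rays is a zero measurement). Then the expected number $N_C^0(k):=|C|-\mathbb{E}[|C_b|]$ of cells recognized as empty satisfies \[ N_C^0(k)=3N_C^1-3N_C^2+N_C^3, \] where \[ N_C^1=\sum_{r\in R_i}|r|\Big(1-\frac{|r|}{|C|}\Big)^k\quad\text{for any } i\in\{1,2,3\}, \] \[ N_C^2=\sum_{r_i\in R_i}\ \sum_{r_j\in R_j(r_i)}\Big(1-\frac{|r_i|+|r_j|-1}{|C|}\Big)^k\quad\text{for any } i\neq j\in\{1,2,3\}, \] \[ N_C^3=\sum_{c\in C}\Big(1-\frac{|r_1(c)|+|r_2(c)|+|r_3(c)|-2}{|C|}\Big)^k, \] and $R_j(r_i)$ denotes the set of rays in $R_j$ intersecting the ray $r_i$ (these quantities do not depend on the choice of $i$, resp. of $i\ne j$).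
   Context: Hexagonal setting. Let $d\ge 3$ be an odd integer. The set of cells is $C=\{(i_1,i_2)\in\mathbb{Z}^2 : |i_1|\le (d-1)/2,\ |i_2|\le (d-1)/2,\ |i_1+i_2|\le (d-1)/2\}$ (the cell centers are $i_1 d^1+i_2 d^2$ with $d^1=\tfrac12(\sqrt3,1)$, $d^2=(0,1)$, forming a hexagon), so $|C|=(3d^2+1)/4$. There are three directions of projection rays: $R_1$ consists of the $d$ rays $\{(i_1,i_2)\in C: i_1=a\}$, $R_2$ of the $d$ rays $\{(i_1,i_2)\in C: i_2=a\}$, and $R_3$ of the $d$ rays $\{(i_1,i_2)\in C: i_1+i_2=a\}$, for $a\in\{-(d-1)/2,\dots,(d-1)/2\}$; a ray is identified with the set of cells it meets, $|r|$ denotes its number of cells, and $R=R_1\cup R_2\cup R_3$, $|R|=3d$. Each cell $c$ lies on exactly one ray $r_i(c)\in R_i$ for each $i=1,2,3$. Random model: $k$ cells are drawn independently and uniformly from $C$ (with replacement; a cell may be drawn several times). For $r\in R$, $X_r\in\{0,1\}$ equals $1$ (a ''zero measurement'') iff none of the drawn cells lies on $r$. For a set $S$ of rays, $\mathcal N(S)$ is the set of cells lying on at least one ray of $S$. *)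

(* Defs.v *)
From HB Require Import structures.
From mathcomp Require Import all_boot all_order all_algebra.
Set Implicit Arguments. Unset Strict Implicit. Unset Printing Implicit Defensive.
Import Order.TTheory GRing.Theory Num.Theory.

Local Open Scope ring_scope.

Definition hrad (d : nat) : nat := (d.-1)./2.

(* A point (a,b) : 'I_d * 'I_d encodes the integer coordinates
   (i1,i2) = (a - h, b - h), so that |i1|,|i2| <= h automatically. *)
Definition coord1 (d : nat) (p : 'I_d * 'I_d) : int := (val p.1)%:Z - (hrad d)%:Z.
Definition coord2 (d : nat) (p : 'I_d * 'I_d) : int := (val p.2)%:Z - (hrad d)%:Z.

Definition is_cell (d : nat) (p : 'I_d * 'I_d) : bool :=
  `|coord1 p + coord2 p| <= (hrad d)%:Z.

Definition cell (d : nat) : finType := {p : 'I_d * 'I_d | is_cell p}.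

(* Rays: direction t in {0,1,2} (meaning R_1, R_2, R_3) and offset a in 'I_d
   encoding the integer a - h in {-h..h}. *)
Definition ray (d : nat) : finType := ('I_3 * 'I_d)%type.

Definition ray_dir (d : nat) (r : ray d) : 'I_3 := r.1.
Definition ray_val (d : nat) (r : ray d) : int := (val r.2)%:Z - (hrad d)%:Z.

Definition proj (d : nat) (t : 'I_3) (c : cell d) : int :=
  match val t with
  | 0%N => coord1 (val c)
  | 1%N => coord2 (val c)
  | _ => coord1 (val c) + coord2 (val c)
  end.

Definition raycells (d : nat) (r : ray d) : {set cell d} :=
  [set c : cell d | proj (ray_dir r) c == ray_val r].

Definition rsize (d : nat) (r : ray d) : nat := #|raycells r|.

(* r_i(c): the unique ray of R_i through c *)
Definition ray_of (d : nat) (t : 'I_3) (c : cell d) : ray d :=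
  let p := val c in
  (t, match val t with
      | 0%N => p.1
      | 1%N => p.2
      | _ => insubd p.1 (val p.1 + val p.2 - hrad d)%N
      end).
(* (offset index = projection + h, which lies in 'I_d for cells) *)

Definition Nset (d : nat) (S : {set ray d}) : {set cell d} :=
  [set c : cell d | [exists r in S, c \in raycells r]].

(* A draw of k cells (with replacement) *)
Definition draw (d k : nat) : finType := {ffun 'I_k -> cell d}.

Definition Xr (d k : nat) (w : draw d k) (r : ray d) : bool :=
  [forall l : 'I_k, w l \notin raycells r].

Definition Rb (d k : nat) (w : draw d k) : {set ray d} := [set r | ~~ Xr w r].

Definition Cb (d k : nat) (w : draw d k) : {set cell d} :=
  Nset (Rb w) :\: Nset (~: Rb w).

(* E[|C_b|] under the uniform distribution on draws (k i.i.d. uniform cells) *)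
Definition expect_Cb (d k : nat) : rat :=
  (\sum_(w : draw d k) (#|Cb w|)%:R) / (#|cell d|%:R ^+ k).

Definition NC0 (d k : nat) : rat := (#|cell d|)%:R - expect_Cb d k.

Definition NC1 (d k : nat) (i : 'I_3) : rat :=
  \sum_(r : ray d | ray_dir r == i)
     (rsize r)%:R * (1 - (rsize r)%:R / (#|cell d|)%:R) ^+ k.

Definition NC2 (d k : nat) (i j : 'I_3) : rat :=
  \sum_(ri : ray d | ray_dir ri == i)
    \sum_(rj : ray d | (ray_dir rj == j) && (raycells ri :&: raycells rj != set0))
      (1 - ((rsize ri)%:R + (rsize rj)%:R - 1) / (#|cell d|)%:R) ^+ k.

Definition NC3 (d k : nat) : rat :=
  \sum_(c : cell d)
    (1 - ((rsize (ray_of (inord 0) c))%:R + (rsize (ray_of (inord 1) c))%:R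
          + (rsize (ray_of (inord 2) c))%:R - 2) / (#|cell d|)%:R) ^+ k.

(* Main.v *)
Require Import Defs.
From HB Require Import structures.
From mathcomp Require Import all_boot all_order all_algebra zify ring lra.
Import Order.TTheory GRing.Theory Num.Theory.
Local Open Scope ring_scope.

Section Hex.
Variable d : nat.
Hypothesis hodd : odd d.
Local Notation h := (hrad d).

Lemma d_eq : d = (h.*2).+1.
Proof.
move: hodd; rewrite /hrad; case: d => [//|n] /= hn.
by rewrite -[in LHS](odd_double_half n) (negbTE hn).
Qed.

Lemma cellP (c : cell d) :
  [/\ (h <= val (val c).1 + val (val c).2)%N, (val (val c).1 + val (val c).2 <= 3 * h)%N,
      (val (val c).1 <= h.*2)%N & (val (val c).2 <= h.*2)%N].
Proof.
case: c => [[a b]] /=; rewrite /is_cell /coord1 /coord2 /= => H.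
have ha := ltn_ord a; have hb := ltn_ord b; have hd := d_eq.
move: H; rewrite ler_norml => /andP[H1 H2]. split; lia.
Qed.

Lemma ray_dir_of t (c : cell d) : ray_dir (ray_of t c) = t.
Proof. by []. Qed.

Lemma ray_val_of t (c : cell d) : ray_val (ray_of t c) = proj t c.
Proof.
have [H1 H2 H3 H4] := cellP c; have hd := d_eq.
case: c H1 H2 H3 H4 => [[a b] Hc] /= H1 H2 H3 H4.
case: t => [[|[|[|m]]] ht] //; rewrite /ray_val /proj /ray_of /coord1 /coord2 /=.
rewrite val_insubd ifT; last lia.
lia.
Qed.

Lemma in_ray_of t (c c' : cell d) :
  (c' \in raycells (ray_of t c)) = (proj t c' == proj t c).
Proof. by rewrite inE ray_val_of. Qed.

Lemma ray_ofP (r : ray d) (c : cell d) :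
  (c \in raycells r) = (ray_of (ray_dir r) c == r).
Proof.
case: r => [t o]; rewrite inE /= -ray_val_of /ray_val /=.
rewrite -pair_eqE /= eqxx /=.
apply/eqP/eqP => [H|->] //; apply/val_inj => /=; lia.
Qed.

Lemma proj_inj s t (c c' : cell d) : s != t ->
  proj s c = proj s c' -> proj t c = proj t c' -> c = c'.
Proof.
case: c c' => [[a b] Hc] [[a' b'] Hc'].
rewrite /proj /coord1 /coord2 /=.
case: s t => [[|[|[|m]]] hs] [[|[|[|n]]] ht] //= _ E1 E2;
  apply/val_inj => /=; congr pair; apply/val_inj => /=; lia.
Qed.

Definition sz t (c : cell d) := rsize (ray_of t c).
Local Notation N := (#|cell d|).

Lemma NC1_cells k i : NC1 d k i = \sum_c (1 - (sz i c)%:R / N%:R) ^+ k.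
Proof.
rewrite /NC1 [RHS](partition_big (ray_of i) (fun r => ray_dir r == i)) //=.
apply: eq_bigr => r /eqP hr.
rewrite mulr_natl -sumr_const.
apply: eq_big => c; first by rewrite ray_ofP hr.
by rewrite ray_ofP hr => /eqP <-.
Qed.

Lemma NC2_cells k i j : i != j -> NC2 d k i j =
  \sum_c (1 - ((sz i c)%:R + (sz j c)%:R - 1) / N%:R) ^+ k.
Proof.
move=> hij.
rewrite /NC2 [RHS](partition_big (ray_of i) (fun r => ray_dir r == i)) //=.
apply: eq_bigr => ri /eqP hri.
rewrite [RHS](partition_big (ray_of j)
   (fun rj => (ray_dir rj == j) && (raycells ri :&: raycells rj != set0))) /=; last first.
  move=> c /eqP hc; apply/andP; split=> //; apply/set0Pn; exists c.
  by rewrite inE in_ray_of eqxx andbT ray_ofP hri hc eqxx.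
apply: eq_bigr => rj /andP[/eqP hrj /set0Pn [c0]].
rewrite inE ray_ofP hri ray_ofP hrj => /andP[/eqP h0i /eqP h0j].
rewrite (big_pred1 c0) /sz ?h0i ?h0j //.
move=> c /=; apply/idP/idP => [/andP[/eqP hci /eqP hcj]|/eqP ->]; last by rewrite h0i h0j !eqxx.
apply/eqP; apply: (@proj_inj i j c c0 hij).
  by apply/eqP; rewrite -in_ray_of h0i ray_ofP hri hci.
by apply/eqP; rewrite -in_ray_of h0j ray_ofP hrj hcj.
Qed.

Lemma sz_E t c : sz t c = #|[set c' : cell d | proj t c' == proj t c]|.
Proof. by apply: eq_card => x; rewrite in_ray_of inE. Qed.

Lemma sz_perm (pi : cell d -> cell d) (pik : involutive pi) t t' :
  (forall c c', (proj t' (pi c) == proj t' (pi c')) = (proj t c == proj t c')) ->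
  forall c, sz t' (pi c) = sz t c.
Proof.
move=> H c; rewrite !sz_E -(card_preimset _ (inv_inj pik)).
by apply: eq_card => x; rewrite !inE H.
Qed.

Local Notation t0 := (inord 0 : 'I_3).
Local Notation t1 := (inord 1 : 'I_3).
Local Notation t2 := (inord 2 : 'I_3).

Lemma inord0E : (inord 0 : 'I_3) = @Ordinal 3 0 isT.
Proof. by apply/val_inj; rewrite /= inordK. Qed.
Lemma inord1E : (inord 1 : 'I_3) = @Ordinal 3 1 isT.
Proof. by apply/val_inj; rewrite /= inordK. Qed.
Lemma inord2E : (inord 2 : 'I_3) = @Ordinal 3 2 isT.
Proof. by apply/val_inj; rewrite /= inordK. Qed.

Lemma proj0 (c : cell d) : proj t0 c = coord1 (val c). Proof. by rewrite inord0E. Qed.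
Lemma proj1 (c : cell d) : proj t1 c = coord2 (val c). Proof. by rewrite inord1E. Qed.
Lemma proj2 (c : cell d) : proj t2 c = coord1 (val c) + coord2 (val c). Proof. by rewrite inord2E. Qed.

Lemma sig_cell (c : cell d) : is_cell ((val c).2, (val c).1).
Proof. by case: c => [[a b] Hc]; rewrite /is_cell /coord1 /coord2 /= addrC. Qed.
Definition sigc (c : cell d) : cell d := @exist _ (@is_cell d) _ (sig_cell c).

Lemma sigcK : involutive sigc.
Proof. by case=> [[a b] Hc]; apply/val_inj. Qed.

Lemma tau_lt (c : cell d) : (3 * h - val (val c).1 - val (val c).2 < d)%N.
Proof. have [H1 H2 H3 H4] := cellP c; have hd := d_eq; lia. Qed.

Lemma tau_cell (c : cell d) : is_cell (Ordinal (tau_lt c), (val c).2).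
Proof.
have [H1 H2 H3 H4] := cellP c; have hd := d_eq.
move: (tau_lt c) H1 H2 H3 H4; case: c => [[a b] Hc] /= ht H1 H2 H3 H4.
rewrite /is_cell /coord1 /coord2 /= ler_norml; apply/andP; split; lia.
Qed.
Definition tauc (c : cell d) : cell d := @exist _ (@is_cell d) _ (tau_cell c).

Lemma tau_c1 (c : cell d) : coord1 (val (tauc c)) = - (coord1 (val c) + coord2 (val c)).
Proof.
have [H1 H2 H3 H4] := cellP c.
rewrite /coord1 /coord2 /=; move: H1 H2 H3 H4; case: c => [[a b] Hc] /=; lia.
Qed.

Lemma tau_c2 (c : cell d) : coord2 (val (tauc c)) = coord2 (val c).
Proof. by []. Qed.

Lemma taucK : involutive tauc.
Proof.
move=> c; apply/val_inj; have [H1 H2 H3 H4] := cellP c.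
move: H1 H2 H3 H4; case: c => [[a b] Hc] /= H1 H2 H3 H4.
congr pair; apply/val_inj => /=; lia.
Qed.

Lemma sz_sig0 (c : cell d) : sz t0 (sigc c) = sz t1 c.
Proof. by apply: (@sz_perm sigc sigcK) => x y; rewrite !proj0 !proj1. Qed.
Lemma sz_sig1 (c : cell d) : sz t1 (sigc c) = sz t0 c.
Proof. by apply: (@sz_perm sigc sigcK) => x y; rewrite !proj0 !proj1. Qed.
Lemma sz_sig2 (c : cell d) : sz t2 (sigc c) = sz t2 c.
Proof. by apply: (@sz_perm sigc sigcK) => x y; ( rewrite !proj2 /= addrC [coord1 (val y) + _]addrC). Qed.
Lemma sz_tau0 (c : cell d) : sz t0 (tauc c) = sz t2 c.
Proof. by apply: (@sz_perm tauc taucK) => x y; ( rewrite !proj0 !proj2 !tau_c1 eqr_opp). Qed.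
Lemma sz_tau2 (c : cell d) : sz t2 (tauc c) = sz t0 c.
Proof.
apply: (@sz_perm tauc taucK) => x y; ( rewrite !proj0 !proj2 !tau_c1 !tau_c2).
by rewrite /coord1 /coord2; apply/eqP/eqP => E; lia.
Qed.
Lemma sz_tau1 (c : cell d) : sz t1 (tauc c) = sz t1 c.
Proof. by apply: (@sz_perm tauc taucK) => x y; ( rewrite !proj1 !tau_c2). Qed.

Lemma ord3 (t : 'I_3) : [\/ t = t0, t = t1 | t = t2].
Proof.
rewrite inord0E inord1E inord2E.
by case: t => [[|[|[|m]]] ht]; [apply: Or31|apply: Or32|apply: Or33|]; try apply/val_inj.
Qed.

Lemma sum_sz1 (F : nat -> rat) t : \sum_(c : cell d) F (sz t c) = \sum_(c : cell d) F (sz t0 c).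
Proof.
case: (ord3 t) => ->; first by [].
  by rewrite (reindex_inj (inv_inj sigcK)); apply: eq_bigr => c _; rewrite sz_sig1.
by rewrite (reindex_inj (inv_inj taucK)); apply: eq_bigr => c _; rewrite sz_tau2.
Qed.

Lemma sum_sz2 (G : nat -> nat -> rat) (Gs : forall x y, G x y = G y x) s t : s != t ->
  \sum_(c : cell d) G (sz s c) (sz t c) = \sum_(c : cell d) G (sz t0 c) (sz t1 c).
Proof.
have E21 : \sum_(c : cell d) G (sz t2 c) (sz t1 c) = \sum_(c : cell d) G (sz t0 c) (sz t1 c).
  rewrite [RHS](reindex_inj (inv_inj taucK)); apply: eq_bigr => c _.
  by rewrite sz_tau0 sz_tau1.
have E20 : \sum_(c : cell d) G (sz t2 c) (sz t0 c) = \sum_(c : cell d) G (sz t0 c) (sz t1 c).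
  rewrite -E21 [RHS](reindex_inj (inv_inj sigcK)); apply: eq_bigr => c _.
  by rewrite sz_sig2 sz_sig1.
have sw : forall a b, \sum_(c : cell d) G (sz a c) (sz b c) = \sum_(c : cell d) G (sz b c) (sz a c).
  by move=> a b; apply: eq_bigr => c _; rewrite Gs.
case: (ord3 s) => ->; case: (ord3 t) => -> //; rewrite ?eqxx //; try by [].
all: try by rewrite sw E20.
all: try by rewrite sw.
all: try by rewrite E21.
all: try by rewrite E20.
all: try by rewrite sw E21.
Qed.

Lemma card_sumR (T : finType) (A : {set T}) : ((#|A|)%:R : rat) = \sum_(x : T) ((x \in A) : nat)%:R.
Proof.
rewrite -sum1_card natr_sum big_mkcond /=; apply: eq_bigr => x _.
by case: (x \in A).
Qed.

Lemma incl_excl (x y z : bool) : (([&& ~~x, ~~y & ~~z] : nat)%:R : rat) =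
  1 - (x : nat)%:R - (y : nat)%:R - (z : nat)%:R + ((x && y) : nat)%:R + ((x && z) : nat)%:R
  + ((y && z) : nat)%:R - ([&& x, y & z] : nat)%:R.
Proof. by case: x; case: y; case: z => /=; lra. Qed.

Lemma Nset_in (S : {set ray d}) (c : cell d) :
  (c \in Nset S) = [|| ray_of t0 c \in S, ray_of t1 c \in S | ray_of t2 c \in S].
Proof.
rewrite inE; apply/existsP/idP.
  case=> r /andP[rS]; rewrite ray_ofP => /eqP cr; rewrite -cr in rS.
  by case: (ord3 (ray_dir r)) => E; rewrite E in rS; rewrite rS ?orbT.
case/or3P => H; [exists (ray_of t0 c)|exists (ray_of t1 c)|exists (ray_of t2 c)];
  by rewrite H in_ray_of eqxx.
Qed.

Lemma Cb_in k (w : draw d k) (c : cell d) : (c \in Cb w) =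
  [&& ~~ Xr w (ray_of t0 c), ~~ Xr w (ray_of t1 c) & ~~ Xr w (ray_of t2 c)].
Proof.
rewrite /Cb inE !Nset_in !inE.
by case: (Xr w (ray_of t0 c)); case: (Xr w (ray_of t1 c)); case: (Xr w (ray_of t2 c)).
Qed.

Lemma sum_boolR (T : finType) (P : pred T) : \sum_(x : T) ((P x : nat)%:R : rat) = (#|P|)%:R.
Proof.
rewrite -sum1_card natr_sum [RHS]big_mkcond /=; apply: eq_bigr => x _.
by rewrite unfold_in; case: (P x).
Qed.

Lemma count_avoid k (S : {set cell d}) :
  \sum_(w : draw d k) (([forall l, w l \notin S]) : nat)%:R = ((N - #|S|)%N%:R : rat) ^+ k.
Proof.
rewrite (@sum_boolR _ (fun w : draw d k => [forall l, w l \notin S])) -natrX.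
have -> : (N - #|S| = #|~: S|)%N by rewrite [#|~: S|]cardsCs setCK.
rewrite -[in RHS](card_ord k) -(card_ffun_on 'I_k (mem (~: S))); congr (_ %:R).
apply: eq_card => w; rewrite unfold_in /=.
apply/forallP/ffun_onP => H l; move: (H l); by rewrite !inE.
Qed.

Lemma XrU k (w : draw d k) r r' :
  Xr w r && Xr w r' = [forall l, w l \notin raycells r :|: raycells r'].
Proof.
apply/andP/forallP => [[/forallP H1 /forallP H2] l|H].
  by rewrite inE negb_or H1 H2.
by split; apply/forallP => l; move: (H l); rewrite inE negb_or => /andP[].
Qed.

Lemma XrU3 k (w : draw d k) r r' r'' :
  [&& Xr w r, Xr w r' & Xr w r''] =
  [forall l, w l \notin raycells r :|: raycells r' :|: raycells r''].
Proof.
rewrite andbA XrU.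
apply/andP/forallP => [[/forallP H1 /forallP H2] l|H].
  by rewrite inE negb_or H1 H2.
by split; apply/forallP => l; move: (H l); rewrite inE negb_or => /andP[].
Qed.

Lemma pS k (S : {set cell d}) (c : cell d) : c \in S ->
  (((N - #|S|)%N%:R : rat) ^+ k / N%:R ^+ k) = (1 - (#|S|)%:R / N%:R) ^+ k.
Proof.
move=> cS.
have hN : (0 < N)%N by apply/card_gt0P; exists c.
have hS : (#|S| <= N)%N by apply: max_card.
rewrite natrB // -expr_div_n mulrBl divff //.
by rewrite pnatr_eq0 -lt0n.
Qed.

Lemma setI_rays s t (c : cell d) : s != t ->
  raycells (ray_of s c) :&: raycells (ray_of t c) = [set c].
Proof.
move=> st; apply/setP => x; rewrite in_setI !in_ray_of in_set1.
apply/andP/eqP => [[/eqP a /eqP b]|->]; first exact: proj_inj st a b.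
by rewrite !eqxx.
Qed.

Lemma cardU2 s t (c : cell d) : s != t ->
  ((#|raycells (ray_of s c) :|: raycells (ray_of t c)|)%:R : rat) = (sz s c)%:R + (sz t c)%:R - 1.
Proof.
move=> st; have := cardsUI (raycells (ray_of s c)) (raycells (ray_of t c)).
rewrite setI_rays // cards1 => /(congr1 (fun n => (n%:R : rat))).
rewrite !natrD /sz /rsize => E; lra.
Qed.

Lemma t01 : t0 != t1. Proof. by rewrite inord0E inord1E. Qed.
Lemma t02 : t0 != t2. Proof. by rewrite inord0E inord2E. Qed.
Lemma t12 : t1 != t2. Proof. by rewrite inord1E inord2E. Qed.

Lemma cardU3 (c : cell d) :
  ((#|raycells (ray_of t0 c) :|: raycells (ray_of t1 c) :|: raycells (ray_of t2 c)|)%:R : rat)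
  = (sz t0 c)%:R + (sz t1 c)%:R + (sz t2 c)%:R - 2.
Proof.
have := cardsUI (raycells (ray_of t0 c) :|: raycells (ray_of t1 c)) (raycells (ray_of t2 c)).
rewrite setIUl !setI_rays ?t02 ?t12 // setUid cards1 => /(congr1 (fun n => (n%:R : rat))).
rewrite !natrD cardU2 ?t01 // /sz /rsize => E; lra.
Qed.

Lemma expect_E k : expect_Cb d k = \sum_(c : cell d)
  (1 - (1 - (sz t0 c)%:R / N%:R) ^+ k - (1 - (sz t1 c)%:R / N%:R) ^+ k
     - (1 - (sz t2 c)%:R / N%:R) ^+ k
     + (1 - ((sz t0 c)%:R + (sz t1 c)%:R - 1) / N%:R) ^+ k
     + (1 - ((sz t0 c)%:R + (sz t2 c)%:R - 1) / N%:R) ^+ k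
     + (1 - ((sz t1 c)%:R + (sz t2 c)%:R - 1) / N%:R) ^+ k
     - (1 - ((sz t0 c)%:R + (sz t1 c)%:R + (sz t2 c)%:R - 2) / N%:R) ^+ k).
Proof.
rewrite /expect_Cb.
under eq_bigr => w _ do rewrite card_sumR.
rewrite exchange_big /= mulr_suml; apply: eq_bigr => c _.
under eq_bigr => w _ do rewrite Cb_in incl_excl XrU3 !XrU.
rewrite !(sumrB, big_split) /= sumr_const card_ffun card_ord !count_avoid.
have inA : forall t, c \in raycells (ray_of t c) by move=> t; rewrite in_ray_of.
have hN : (0 < N)%N by apply/card_gt0P; exists c.
have hM : (N%:R ^+ k : rat) != 0 by rewrite expf_neq0 // pnatr_eq0 -lt0n.
have pS' : forall S : {set cell d}, c \in S ->
    ((N - #|S|)%N%:R : rat) ^+ k = (1 - (#|S|)%:R / N%:R) ^+ k * N%:R ^+ k.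
  by move=> S cS; rewrite -(@pS k S c cS) divfK.
have inU : forall A B : {set cell d}, c \in A -> c \in A :|: B.
  by move=> A B cA; rewrite in_setU cA.
have e0 := pS' _ (inA t0). have e1 := pS' _ (inA t1). have e2 := pS' _ (inA t2).
have e01 := pS' _ (inU _ (raycells (ray_of t1 c)) (inA t0)); rewrite cardU2 ?t01 // in e01.
have e02 := pS' _ (inU _ (raycells (ray_of t2 c)) (inA t0)); rewrite cardU2 ?t02 // in e02.
have e12 := pS' _ (inU _ (raycells (ray_of t2 c)) (inA t1)); rewrite cardU2 ?t12 // in e12.
have e012 := pS' _ (inU _ (raycells (ray_of t2 c)) (inU _ (raycells (ray_of t1 c)) (inA t0))).
rewrite cardU3 in e012.
rewrite e0 e1 e2 e01 e02 e12 e012 natrX /sz.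
field; exact: hM.
Qed.
End Hex.

Theorem proposition3p2 (d k : nat) (hodd : odd d) (hd : (3 <= d)%N)
    (i j : 'I_3) (hij : i != j) :
  NC0 d k = 3%:R * NC1 d k i - 3%:R * NC2 d k i j + NC3 d k.
Proof.
rewrite /NC0 (expect_E d hodd) (NC1_cells d hodd) (NC2_cells d hodd _ _ _ hij).
set N := #|cell d|.
have h1 := sum_sz1 d hodd (fun x => (1 - x%:R / N%:R) ^+ k).
have h2 := sum_sz2 d hodd ( fun x y => (1 - (x%:R + y%:R - 1) / N%:R) ^+ k).
have Gs : forall x y : nat, (1 - (x%:R + y%:R - 1) / N%:R) ^+ k = 
   (1 - (y%:R + x%:R - 1) / N%:R) ^+ k :> rat by move=> x y; rewrite (addrC x%:R).
have hs := h2 Gs; simpl in h1, hs.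
have hN1 : \sum_(c : cell d) (1 : rat) = N%:R by rewrite sumr_const.
have -> : NC3 d k = \sum_(c : cell d)
      (1 - ((sz d (inord 0) c)%:R + (sz d (inord 1) c)%:R + (sz d (inord 2) c)%:R - 2)
       / N%:R) ^+ k by [].
rewrite !(sumrB, big_split) /=.
rewrite (h1 i) (hs _ _ hij) (h1 (inord 1)) (h1 (inord 2)).
rewrite (hs (inord 0) (inord 2)) ?t02 // (hs (inord 1) (inord 2)) ?t12 //.
rewrite hN1; lra.
Qed.
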